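(* Let $k:\mathcal X\times\mathcal X\to\mathbb R$ be a positive-definite kernel with RKHS $(\mathcal F_k,\langle\cdot,\cdot\rangle_k)$, let $x_1,\dots,x_N\in\mathcal X$ be distinct, $\mathbf z_N\in\mathbb R^N$, and $\nu>0$, $s\in\mathbb N$. Let $\mathbf K_N=[k(x_i,x_j)]_{i,j}$, $\mathbf k_N(x)=[k(x,x_i)]_i$, $\Sigma_N=\mathbf K_N(e^{\nu s\mathbf K_N}-I)^{-1}$, and $$\hat\pi_N(x)=\mathbf k_N(x)^\top(\mathbf K_N+\Sigma_N)^{-1}\mathbf z_N,\quad x\in\mathcal X$$ (the NTK-regime gradient-descent predictor after $s$ steps with learning rate $\nu$ and zero initialization). Define $\Phi_N:\mathbb R^N\to\mathcal F_k$, $\Phi_N\mathbf a=\sum_i a_ik(\cdot,x_i)$, with adjoint $\Phi_N^*\pi=(\pi(x_i))_{i=1}^N$, and the positive self-adjoint operator $R_N=\Phi_N(e^{\nu s\mathbf K_N}-I)^{-1}\Phi_N^*$ on $\mathcal F_k$. Then $\hat\pi_N\in\mathcal F_k$ and $$\hat\pi_N\in\operatorname*{argmin}_{\pi\in\mathcal F_k}\;\sum_{i=1}^N(\pi(x_i)-z_i)^2+\langle\pi,R_N\pi\rangle_k.$$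
   Context: The paper writes the regularizer as $\|R_N^{1/2}\pi\|_k^2=\langle\pi,R_N\pi\rangle_k$. (The paper's displayed statement has a sign typo in the exponent of $R_N$; the version above is the one consistent with $\Sigma_N$ and the proof.) *)

(* Defs.v *)
From HB Require Import structures.
From mathcomp Require Import all_boot all_order all_algebra.
From mathcomp Require Import all_classical all_reals all_analysis.
Set Implicit Arguments. Unset Strict Implicit. Unset Printing Implicit Defensive.
Import Order.TTheory GRing.Theory Num.Theory.
Import numFieldNormedType.Exports.
Local Open Scope classical_set_scope.
Local Open Scope ring_scope.

Definition expmx (R : realType) (n : nat) (A : 'M[R]_n) : 'M[R]_n :=
  lim ((fun m : nat => \sum_(j < m) (j`!%:R)^-1 *: (A ^+ j)) @ \oo).

Definition pd_kernel (R : realType) (X : Type) (k : X -> X -> R) : Prop :=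
  (forall x y, k x y = k y x) /\
  (forall (n : nat) (p : 'I_n -> X), injective p ->
     forall a : 'cV[R]_n, a != 0 ->
       0 < \sum_(i < n) \sum_(j < n) a i 0 * a j 0 * k (p i) (p j)).

(* (F, ip) is the RKHS of k: a real Hilbert space of functions X -> R
   (F the set of its elements, ip its inner product) with reproducing kernel k. *)
Record IsRKHS (R : realType) (X : Type) (k : X -> X -> R)
    (F : set (X -> R)) (ip : (X -> R) -> (X -> R) -> R) : Prop := {
  rkhs_zero : F (fun _ => 0);
  rkhs_lin : forall (a : R) f g, F f -> F g -> F (fun x => a * f x + g x);
  rkhs_ip_sym : forall f g, F f -> F g -> ip f g = ip g f;
  rkhs_ip_linl : forall (a : R) f g h, F f -> F g -> F h ->
      ip (fun x => a * f x + g x) h = a * ip f h + ip g h;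
  rkhs_ip_pos : forall f, F f -> (exists x, f x != 0) -> 0 < ip f f;
  rkhs_kernel : forall x, F (fun y => k y x);
  rkhs_reproducing : forall f x, F f -> ip f (fun y => k y x) = f x;
  rkhs_complete : forall u : nat -> X -> R, (forall n, F (u n)) ->
      (forall e : R, 0 < e -> exists N, forall m n, (N <= m)%N -> (N <= n)%N ->
          ip (fun x => u m x - u n x) (fun x => u m x - u n x) < e) ->
      exists f, F f /\ forall e : R, 0 < e -> exists N, forall n, (N <= n)%N ->
          ip (fun x => u n x - f x) (fun x => u n x - f x) < e
}.

Section Defs.
Variables (R : realType) (X : Type) (k : X -> X -> R) (N : nat) (xs : 'I_N -> X).

Definition gramK : 'M[R]_N := \matrix_(i, j) k (xs i) (xs j).
Definition kvec (x : X) : 'cV[R]_N := \col_i k x (xs i).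
Definition expdiff (nu : R) (s : nat) : 'M[R]_N :=
  expmx ((nu * s%:R) *: gramK) - 1%:M.
Definition SigmaN (nu : R) (s : nat) : 'M[R]_N := gramK *m invmx (expdiff nu s).
Definition pihat (nu : R) (s : nat) (z : 'cV[R]_N) (x : X) : R :=
  ((kvec x)^T *m invmx (gramK + SigmaN nu s) *m z) 0 0.
Definition PhiN (a : 'cV[R]_N) : X -> R := fun y => \sum_(i < N) a i 0 * k y (xs i).
Definition PhiNstar (f : X -> R) : 'cV[R]_N := \col_i f (xs i).
Definition RN (nu : R) (s : nat) (f : X -> R) : X -> R :=
  PhiN (invmx (expdiff nu s) *m PhiNstar f).
Definition objective (ip : (X -> R) -> (X -> R) -> R) (nu : R) (s : nat)
    (z : 'cV[R]_N) (f : X -> R) : R :=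
  \sum_(i < N) (f (xs i) - z i 0) ^+ 2 + ip f (RN nu s f).
End Defs.

(* Main.v *)
Require Import Defs.
From HB Require Import structures.
From mathcomp Require Import all_boot all_order all_algebra.
From mathcomp Require Import all_classical all_reals all_analysis.
From mathcomp Require Import ring lra.
Import Order.TTheory GRing.Theory Num.Theory.
Import numFieldNormedType.Exports.
Local Open Scope classical_set_scope.
Local Open Scope ring_scope.
HB.instance Definition _ (R : realType) (m n : nat) := NormedModule.on 'M[R]_(m,n).
Section S.
Variables (R : realType) (N : nat).
Implicit Types (M : 'M[R]_N).

Lemma entry_le M i j : `|M i j| <= `|M|.
Proof.
by rewrite [leRHS]/Num.Def.normr /= mx_normrE; apply/bigmax_geP; right => /=; exists (i, j).
Qed.

Lemma norm_le M e : 0 <= e -> (forall i j, `|M i j| <= e) -> `|M| <= e.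
Proof.
move=> e0 H; rewrite [leLHS]/Num.Def.normr /= mx_normrE; apply: bigmax_le => //= -[i j] _; exact: H.
Qed.

Lemma normM_le (B C : 'M[R]_N) : `|B *m C| <= N%:R * `|B| * `|C|.
Proof.
apply: norm_le; first by rewrite !mulr_ge0.
move=> i j; rewrite mxE; apply: le_trans (ler_norm_sum _ _ _) _.
rewrite -mulrA; have -> : N%:R * (`|B| * `|C|) = \sum_(l < N) `|B| * `|C|.
  by rewrite sumr_const card_ord mulr_natl.
apply: ler_sum => l _.
by rewrite normrM ler_pM ?entry_le.
Qed.

Lemma norm1_le : `|(1 : 'M[R]_N)| <= 1.
Proof.
apply: norm_le => // i j; rewrite !mxE; by case: (i == j); rewrite ?normr1 ?normr0.
Qed.

Lemma norm_exp (A : 'M[R]_N) j : `|A ^+ j| <= (N%:R * `|A|) ^+ j.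
Proof.
elim: j => [|j IH]; first by rewrite !expr0 norm1_le.
rewrite exprSr -mulmxE exprSr; apply: le_trans (normM_le _ _) _.
have h : 0 <= N%:R * `|A| by rewrite mulr_ge0.
rewrite (_ : N%:R * `|A ^+ j| * `|A| = `|A ^+ j| * (N%:R * `|A|)); last by ring.
exact: ler_wpM2r.
Qed.

Definition useq (A : 'M[R]_N) (j : nat) : 'M[R]_N := (j`!%:R)^-1 *: A ^+ j.

Lemma cvg_useq (A : 'M[R]_N) : cvgn (series (useq A)).
Proof.
apply: normed_cvg.
apply: (@series_le_cvg _ _ (exp_coeff (N%:R * `|A|))).
- by move=> n /=.
- by move=> n; apply: exp_coeff_ge0; rewrite mulr_ge0.
- move=> n /=; rewrite /useq normrZ /exp_coeff /= mulrC ger0_norm; last by rewrite invr_ge0.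
  by apply: ler_wpM2r; rewrite ?invr_ge0 // norm_exp.
- exact: is_cvg_series_exp_coeff.
Qed.

Lemma expmx_cvg (A : 'M[R]_N) :
  (fun m => \sum_(j < m) (j`!%:R)^-1 *: A ^+ j) @ \oo --> expmx A.
Proof.
have H : (fun m => \sum_(j < m) (j`!%:R)^-1 *: A ^+ j) = series (useq A).
  by apply/funext => m; rewrite /series /= big_mkord.
by rewrite /expmx H; exact: cvg_useq.
Qed.

End S.
Section S2.
Variables (R : realType) (N : nat).

Lemma lin_decomp (phi : 'M[R]_N -> R)
  (Hl : forall a M1 M2, phi (a *: M1 + M2) = a * phi M1 + phi M2) (M : 'M[R]_N) :
  phi M = \sum_i \sum_j M i j * phi (delta_mx i j).
Proof.
have phi0 : phi 0 = 0.
  by have := Hl (-1) 0 0; rewrite scaler0 addr0 mulN1r addNr.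
have phiD : forall M1 M2, phi (M1 + M2) = phi M1 + phi M2.
  by move=> M1 M2; have := Hl 1 M1 M2; rewrite scale1r mul1r.
have phiZ : forall a M1, phi (a *: M1) = a * phi M1.
  by move=> a M1; have := Hl a M1 0; rewrite addr0 phi0 addr0.
have phiS : forall (I : Type) (r : seq I) (F : I -> 'M[R]_N),
    phi (\sum_(i <- r) F i) = \sum_(i <- r) phi (F i).
  move=> I r F; elim: r => [|a r IH]; first by rewrite !big_nil.
  by rewrite !big_cons phiD IH.
rewrite {1}(matrix_sum_delta M) phiS; apply: eq_bigr => i _.
rewrite phiS; apply: eq_bigr => j _; by rewrite phiZ.
Qed.

Lemma lin_cvg (phi : 'M[R]_N -> R)
  (Hl : forall a M1 M2, phi (a *: M1 + M2) = a * phi M1 + phi M2)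
  (u : nat -> 'M[R]_N) (L : 'M[R]_N) :
  u @ \oo --> L -> (fun n => phi (u n)) @ \oo --> phi L.
Proof.
move=> uL.
have -> : (fun n => phi (u n)) = (fun n => \sum_i \sum_j u n i j * phi (delta_mx i j)).
  by apply/funext => n; rewrite lin_decomp.
rewrite lin_decomp //.
apply: cvg_big => // [|i _]; first exact: add_continuous.
apply: cvg_big => // [|j _]; first exact: add_continuous.
apply: cvgMr_tmp.
exact: (continuous_cvg _ (@coord_continuous R N N i j L) uL).
Qed.
End S2.
Arguments lin_cvg {R N}.
Arguments lin_decomp {R N}.
Section Q.
Variables (R : realType) (N : nat).
Implicit Types (B : 'M[R]_N) (v : 'cV[R]_N).

Definition qf B v : R := (v^T *m B *m v) 0 0.

Lemma qf_lin v a B1 B2 : qf (a *: B1 + B2) v = a * qf B1 v + qf B2 v.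
Proof. by rewrite /qf mulmxDr mulmxDl -scalemxAr -scalemxAl !mxE. Qed.

Lemma qfE B v : qf B v = \sum_i \sum_j v i 0 * v j 0 * B i j.
Proof.
rewrite /qf mxE; under eq_bigr do rewrite mxE mulr_suml.
rewrite exchange_big; apply: eq_bigr => i _; apply: eq_bigr => j _.
by rewrite !mxE; ring.
Qed.

Lemma qf1 v : qf 1%:M v = \sum_i v i 0 ^+ 2.
Proof. by rewrite /qf mulmx1 mxE; apply: eq_bigr => i _; rewrite mxE expr2. Qed.

Lemma qf1_ge0 v : 0 <= qf 1%:M v.
Proof. by rewrite qf1 sumr_ge0 // => i _; rewrite sqr_ge0. Qed.

Lemma qf1_gt0 v : v != 0 -> 0 < qf 1%:M v.
Proof.
move=> vn0; rewrite lt_def qf1_ge0 andbT; apply/negP => /eqP H.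
move/eqP: vn0; apply; apply/matrixP => i j; rewrite (ord1 j) mxE.
have : v i 0 ^+ 2 == 0.
  move: H; rewrite qf1 => /eqP; rewrite psumr_eq0 => [/allP/(_ i)|]; last by move=> *; rewrite sqr_ge0.
  by rewrite mem_index_enum => /(_ isT) /implyP /(_ isT).
by rewrite sqrf_eq0 => /eqP.
Qed.

Lemma qfMr B C v : qf (B *m C *m B^T) v = qf C (B^T *m v).
Proof. by rewrite /qf trmx_mul trmxK !mulmxA. Qed.

Lemma qf_pow B : B^T = B -> (forall v, 0 <= qf B v) -> forall j v, 0 <= qf (B ^+ j) v.
Proof.
move=> Bs Bp j; elim: j {-2}j (leqnn j) => [|n IH] j hj v.
  by move: hj; rewrite leqn0 => /eqP->; rewrite expr0 qf1_ge0.
case: j hj => [|[|j]] hj; first by rewrite expr0 qf1_ge0.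
  by rewrite expr1.
rewrite exprS exprSr -!mulmxE.
have -> : B *m (B ^+ j *m B) = B *m B ^+ j *m B^T by rewrite Bs mulmxA.
by rewrite qfMr IH // -ltnS; exact: ltnW.
Qed.

Lemma pd_unit B : (forall v, v != 0 -> 0 < qf B v) -> B \in unitmx.
Proof.
move=> H; rewrite unitmxE unitfE; apply/negP => /det0P [v v0 vB].
have : v^T != 0 by apply: contra v0 => /eqP h; rewrite -(trmxK v) h trmx0.
move/H; rewrite /qf trmxK vB mul0mx mxE ltxx.
done.
Qed.
End Q.
Arguments qf {R N}.

Section Lim.
Variables (R : realType) (N : nat).

Lemma lin_ge (phi : 'M[R]_N -> R)
  (Hl : forall a M1 M2, phi (a *: M1 + M2) = a * phi M1 + phi M2)
  (u : nat -> 'M[R]_N) (L : 'M[R]_N) a n0 :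
  u @ \oo --> L -> (forall n, (n0 <= n)%N -> a <= phi (u n)) -> a <= phi L.
Proof.
move=> uL H; have hc := lin_cvg _ Hl _ _ uL.
rewrite -(cvg_lim _ hc) //; apply: limr_ge; first exact: cvgP hc.
exists n0 => // n /=; exact: H.
Qed.

Lemma lin_eq0 (phi : 'M[R]_N -> R)
  (Hl : forall a M1 M2, phi (a *: M1 + M2) = a * phi M1 + phi M2)
  (u : nat -> 'M[R]_N) (L : 'M[R]_N) :
  u @ \oo --> L -> (forall n, phi (u n) = 0) -> phi L = 0.
Proof.
move=> uL H; apply/le_anti/andP; split; last first.
  by apply: (@lin_ge phi Hl u L _ 0%N uL) => n _; rewrite H.
rewrite -oppr_ge0; apply: (@lin_ge (fun M => - phi M) _ u L _ 0%N uL).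
  by move=> b M1 M2; rewrite Hl opprD mulrN.
by move=> n _; rewrite H oppr0.
Qed.
End Lim.

Section EP.
Variables (R : realType) (N : nat) (K : 'M[R]_N) (c : R).
Hypothesis Ks : K^T = K.
Hypothesis Kpsd : forall v, 0 <= qf K v.
Hypothesis c0 : 0 <= c.

Let A := c *: K.
Let S n := \sum_(j < n) (j`!%:R)^-1 *: A ^+ j.

Lemma A_sym : A^T = A.
Proof. apply/matrixP => i j; rewrite !mxE; congr (_ * _); by rewrite -[in LHS]Ks mxE. Qed.

Lemma qfA v : qf A v = c * qf K v.
Proof. by rewrite /qf /A -scalemxAr -scalemxAl mxE. Qed.

Lemma A_psd v : 0 <= qf A v.
Proof. by rewrite qfA mulr_ge0. Qed.

Lemma pow_sym j : (A ^+ j)^T = A ^+ j.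
Proof.
elim: j => [|j IH]; first by rewrite expr0 trmx1.
rewrite exprS -mulmxE trmx_mul IH A_sym mulmxE -exprSr exprS.
by rewrite (commrX j (commr_refl A)).
Qed.

Lemma S_sym n : (S n)^T = S n.
Proof.
rewrite /S; apply/matrixP => i j; rewrite mxE !summxE; apply: eq_bigr => l _.
by rewrite !mxE -[in LHS]pow_sym mxE.
Qed.

Lemma KA : K *m A = A *m K.
Proof. by rewrite /A -scalemxAr scalemxAl. Qed.

Lemma S_comm n : K *m S n = S n *m K.
Proof.
rewrite /S mulmx_sumr mulmx_suml; apply: eq_bigr => j _.
rewrite -scalemxAr -scalemxAl; congr (_ *: _).
have : GRing.comm K A by rewrite /GRing.comm -!mulmxE KA.
by move/(commrX j); rewrite /GRing.comm -!mulmxE.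
Qed.

Lemma qf_sum v (I : Type) (r : seq I) (F : I -> 'M[R]_N) :
  qf (\sum_(i <- r) F i) v = \sum_(i <- r) qf (F i) v.
Proof.
elim: r => [|a r IH]; first by rewrite !big_nil /qf mulmx0 mul0mx mxE.
by rewrite !big_cons -[F a]scale1r qf_lin IH mul1r scale1r.
Qed.

Lemma qfD v (B1 B2 : 'M[R]_N) : qf (B1 + B2) v = qf B1 v + qf B2 v.
Proof. by rewrite /qf mulmxDr mulmxDl mxE. Qed.
Lemma qfZ v a (B1 : 'M[R]_N) : qf (a *: B1) v = a * qf B1 v.
Proof. by rewrite /qf -scalemxAr -scalemxAl mxE. Qed.

Lemma S_ge n v : (2 <= n)%N -> qf 1%:M v + qf A v <= qf (S n) v.
Proof.
case: n => [|[|m]] // _.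
rewrite /S big_ord_recl big_ord_recl !qfD.
rewrite /= expr0 expr1 !invr1 !scale1r addrA lerDl.
rewrite qf_sum sumr_ge0 // => i _.
rewrite qfZ mulr_ge0 ?invr_ge0 //; apply: qf_pow; [exact: A_sym | exact: A_psd].
Qed.

Let L := expmx A.
Lemma SL : S n @[n --> \oo] --> L.
Proof. exact: (@expmx_cvg R N A). Qed.

Lemma L_sym : L^T = L.
Proof.
apply/matrixP => i j; rewrite mxE; apply/eqP; rewrite -subr_eq0; apply/eqP.
apply: (@lin_eq0 R N (fun M : 'M[R]_N => M j i - M i j) _ S L SL).
  by move=> a M1 M2; rewrite !mxE; ring.
by move=> n; rewrite -[in X in X - _](S_sym n) mxE subrr.
Qed.

Lemma L_comm : K *m L = L *m K.
Proof.
apply/matrixP => i j; apply/eqP; rewrite -subr_eq0; apply/eqP.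
apply: (@lin_eq0 R N (fun M : 'M[R]_N => (K *m M) i j - (M *m K) i j) _ S L SL).
  by move=> a M1 M2; rewrite mulmxDr mulmxDl -scalemxAr -scalemxAl !mxE; ring.
by move=> n; rewrite S_comm subrr.
Qed.

Lemma L_ge v : qf 1%:M v + qf A v <= qf L v.
Proof.
apply: (@lin_ge R N (fun M => qf M v) _ S L _ 2 SL).
  by move=> a M1 M2; exact: qf_lin.
by move=> n hn; exact: S_ge.
Qed.
End EP.

Section RK.
Variables (R : realType) (X : Type) (k : X -> X -> R) (F : set (X -> R))
  (ip : (X -> R) -> (X -> R) -> R) (H : IsRKHS k F ip) (N : nat) (xs : 'I_N -> X).

Lemma ip0 h : F h -> ip (fun _ => 0) h = 0.
Proof.
move=> Fh.
have := @rkhs_ip_linl _ _ _ _ _ H (-1) (fun _ => 0) (fun _ => 0) h (rkhs_zero H) (rkhs_zero H) Fh.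
rewrite (_ : (fun x : X => -1 * 0 + 0) = fun _ => 0); last by apply/funext => x; rewrite mulr0 addr0.
by rewrite mulN1r addNr.
Qed.

Lemma PhiN_seq (r : seq 'I_N) (c : 'cV[R]_N) :
  F (fun y => \sum_(i <- r) c i 0 * k y (xs i)) /\
  (forall h, F h -> ip (fun y => \sum_(i <- r) c i 0 * k y (xs i)) h = \sum_(i <- r) c i 0 * h (xs i)).
Proof.
elim: r => [|a r [IHF IHip]].
  rewrite (_ : (fun y => \sum_(i <- [::]) c i 0 * k y (xs i)) = fun _ => 0); last first.
    by apply/funext => y; rewrite big_nil.
  split; first exact: rkhs_zero H.
  by move=> h Fh; rewrite ip0 // big_nil.
rewrite (_ : (fun y => \sum_(i <- a :: r) c i 0 * k y (xs i)) =
  fun y => c a 0 * (fun y => k y (xs a)) y + (fun y => \sum_(i <- r) c i 0 * k y (xs i)) y); last first.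
  by apply/funext => y; rewrite big_cons.
split; first by apply: (rkhs_lin H) => //; exact: (rkhs_kernel H).
move=> h Fh; rewrite (rkhs_ip_linl H) //; last exact: (rkhs_kernel H).
rewrite big_cons IHip // (rkhs_ip_sym H) //; last exact: (rkhs_kernel H).
by rewrite (rkhs_reproducing H).
Qed.

Lemma PhiN_F (c : 'cV[R]_N) : F (PhiN k xs c).
Proof. exact: (PhiN_seq _ c).1. Qed.

Lemma ip_PhiN (c : 'cV[R]_N) f : F f -> ip f (PhiN k xs c) = \sum_i c i 0 * f (xs i).
Proof.
move=> Ff; rewrite (rkhs_ip_sym H) //; last exact: PhiN_F.
exact: (PhiN_seq _ c).2.
Qed.
End RK.

Section J.
Variables (R : realType) (N : nat).

Definition Jf (M : 'M[R]_N) (z b : 'cV[R]_N) : R :=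
  ((b - z)^T *m (b - z)) 0 0 + (b^T *m M *m b) 0 0.

Lemma e00D (X Y : 'M[R]_1) : (X + Y) 0 0 = X 0 0 + Y 0 0.
Proof. by rewrite mxE. Qed.
Lemma e00N (X : 'M[R]_1) : (- X) 0 0 = - X 0 0.
Proof. by rewrite mxE. Qed.

Lemma trB (m n : nat) (X Y : 'M[R]_(m, n)) : (X - Y)^T = X^T - Y^T.
Proof. by apply/matrixP => i j; rewrite !mxE. Qed.
Lemma trN (m n : nat) (X : 'M[R]_(m, n)) : (- X)^T = - X^T.
Proof. by apply/matrixP => i j; rewrite !mxE. Qed.
Lemma trD (m n : nat) (X Y : 'M[R]_(m, n)) : (X + Y)^T = X^T + Y^T.
Proof. by apply/matrixP => i j; rewrite !mxE. Qed.

Lemma J_decomp (M : 'M[R]_N) (bs d : 'cV[R]_N) : M^T = M ->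
  Jf M (bs + M *m bs) (bs + d) = Jf M (bs + M *m bs) bs + qf 1%:M d + qf M d.
Proof.
move=> Ms; rewrite /Jf /qf mulmx1.
have -> : bs + d - (bs + M *m bs) = d - M *m bs.
  by apply/matrixP => i j; rewrite !mxE; ring.
have -> : bs - (bs + M *m bs) = - (M *m bs).
  by apply/matrixP => i j; rewrite !mxE; ring.
rewrite !trD !trN trmx_mul Ms !mulmxDl !mulmxDr !mulmxN !mulNmx !mulmxA opprK.
rewrite !e00D !e00N; ring.
Qed.
End J.

Theorem mainTheorem8 (R : realType) (X : Type) (k : X -> X -> R)
  (F : set (X -> R)) (ip : (X -> R) -> (X -> R) -> R)
  (N : nat) (xs : 'I_N -> X) (z : 'cV[R]_N) (nu : R) (s : nat) :
  pd_kernel k -> IsRKHS k F ip -> injective xs -> 0 < nu -> (0 < s)%N ->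
  F (pihat k xs nu s z) /\
  forall f, F f -> objective k xs ip nu s z (pihat k xs nu s z) <= objective k xs ip nu s z f.
Proof.
move=> [ksym kpd] H xinj nu0 s0.
set K := gramK k xs.
set c := nu * s%:R.
have c0 : 0 < c by rewrite /c mulr_gt0 // ltr0n.
have Ks : K^T = K by apply/matrixP => i j; rewrite !mxE ksym.
have Kpd : forall v, v != 0 -> 0 < qf K v.
  move=> v v0; rewrite qfE.
  have -> : \sum_i \sum_j v i 0 * v j 0 * K i j =
            \sum_i \sum_j v i 0 * v j 0 * k (xs i) (xs j).
    by apply: eq_bigr => i _; apply: eq_bigr => j _; rewrite mxE.
  exact: kpd.
have Kpsd : forall v, 0 <= qf K v.
  move=> v; have [->|v0] := eqVneq v 0; last exact/ltW/Kpd.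
  by rewrite /qf mulmx0 mxE.
set L := expmx (c *: K).
set E := L - 1%:M.
have hE : expdiff k xs nu s = E by [].
have Es : E^T = E by rewrite /E trB trmx1 (@L_sym R N K c Ks).
have EK : K *m E = E *m K by rewrite /E mulmxBr mulmxBl mulmx1 mul1mx L_comm.
have Eq : forall v, c * qf K v <= qf E v.
  move=> v; have := @L_ge R N K c Ks Kpsd (ltW c0) v.
  have -> : qf E v = qf L v - qf 1%:M v.
    by rewrite /qf /E mulmxBr mulmxBl e00D e00N.
  rewrite -/L qfA => h; lra.
have Epd : forall v, v != 0 -> 0 < qf E v.
  by move=> v v0; apply: lt_le_trans (Eq v); rewrite mulr_gt0 // Kpd.
have Eu : E \in unitmx by exact: pd_unit.
set M := invmx E.
have Ms : M^T = M by rewrite /M trmx_inv Es.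
have MK : K *m M = M *m K.
  have := congr1 (fun Y => M *m Y *m M) EK; rewrite /= !mulmxA mulVmx // mul1mx.
  by rewrite -[M *m K *m E *m M]mulmxA mulmxV // mulmx1.
have Mpsd : forall d, 0 <= qf M d.
  move=> d; rewrite -(mulKVmx Eu d).
  have := @qfMr R N E M (M *m d); rewrite Es => <-.
  rewrite /M mulmxV // mul1mx; apply: le_trans (Eq _).
  by rewrite mulr_ge0 // ltW.
set P := 1%:M + M.
have Ppd : forall v, v != 0 -> 0 < qf P v.
  move=> v v0; rewrite /P qfD; have := @qf1_gt0 R N v v0; have := Mpsd v; lra.
have Pu : P \in unitmx by exact: pd_unit.
have Ku : K \in unitmx by exact: pd_unit.
have hKS : K + SigmaN k xs nu s = K *m P.
  by rewrite /SigmaN hE /P mulmxDr mulmx1.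
set a := invmx (K *m P) *m z.
have hpi : pihat k xs nu s z = PhiN k xs a.
  apply/funext => x; rewrite /pihat hKS /PhiN -mulmxA mxE.
  by apply: eq_bigr => i _; rewrite !mxE mulrC.
have bstar : PhiNstar xs (PhiN k xs a) = K *m a.
  apply/matrixP => i j; rewrite (ord1 j) !mxE; apply: eq_bigr => l _.
  by rewrite !mxE mulrC.
have Pb : z = K *m a + M *m (K *m a).
  have : P *m (K *m a) = z.
    rewrite mulmxA (_ : P *m K = K *m P); last by rewrite /P mulmxDl mulmxDr mulmx1 mul1mx MK.
    by rewrite /a mulKVmx // unitmx_mul Ku Pu.
  by move=> {1}<-; rewrite /P mulmxDl mul1mx.
have hobj : forall f, F f -> objective k xs ip nu s z f = @Jf R N M z (PhiNstar xs f).
  move=> f Ff; rewrite /objective /RN hE -/M (@ip_PhiN R X k F ip H N xs) // /Jf; congr (_ + _).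
    rewrite mxE; apply: eq_bigr => i _; rewrite !mxE expr2; done.
  rewrite -mulmxA mxE; apply: eq_bigr => i _; rewrite !mxE mulrC; done.
split; first by rewrite hpi; exact: (@PhiN_F R X k F ip H N xs).
move=> f Ff.
rewrite !hobj // ?hpi ?bstar; last exact: (@PhiN_F R X k F ip H N xs).
rewrite Pb.
set bs := K *m a.
rewrite -(subrK bs (PhiNstar xs f)) [_ - bs + bs]addrC J_decomp //.
by rewrite -addrA lerDl addr_ge0 // ?qf1_ge0 ?Mpsd.
Qed.
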